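(* Let $r_0,r_1,r_2\ge 1$ with $r_1<r_0$ and $r_1<r_2$, and let $L=\mathfrak{g}(r_0,r_1,r_2)$. Then $b(L)=r_1(r_0+r_2-r_1)$.
   Context: All Lie algebras are over an algebraically closed field $\mathbf{k}$ of characteristic zero. $\mathcal{P}(r_0,r_1,r_2)$ is the poset on $\{b_1,\dots,b_{r_0},m_1,\dots,m_{r_1},t_1,\dots,t_{r_2}\}$ whose strict relations are exactly $b_i\prec m_j$, $m_j\prec t_k$ and $b_i\prec t_k$ for all $i,j,k$. $\mathfrak{g}(r_0,r_1,r_2)$ denotes the nilpotent Lie poset algebra $\mathfrak{g}^{\prec}(\mathcal{P}(r_0,r_1,r_2))$: the Lie algebra under the commutator bracket spanned by matrix units $E_{p,q}$ with $p\prec q$. The breadth of a Lie algebra $L$ is $b(L)=\max_{x\in L}\operatorname{rank}(\mathrm{ad}_x)$, where $\mathrm{ad}_x=[x,-]$. *)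

(* Defs.v *)
From HB Require Import structures.
From mathcomp Require Import all_boot all_order all_algebra.
Set Implicit Arguments. Unset Strict Implicit. Unset Printing Implicit Defensive.
Import GRing.Theory.
Local Open Scope ring_scope.

(* The poset P(r0,r1,r2) on 'I_(r0+r1+r2): indices < r0 are b_1..b_r0,
   indices in [r0, r0+r1) are m_1..m_r1, the rest are t_1..t_r2. *)
Definition plevel (r0 r1 r2 : nat) (i : 'I_(r0 + r1 + r2)) : nat :=
  if (i < r0)%N then 0%N else if (i < r0 + r1)%N then 1%N else 2%N.

Definition pprec (r0 r1 r2 : nat) (i j : 'I_(r0 + r1 + r2)) : bool :=
  (plevel i < plevel j)%N.

Definition in_gP (F : fieldType) (r0 r1 r2 : nat) (x : 'M[F]_(r0 + r1 + r2)) : Prop :=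
  forall i j, ~~ pprec i j -> x i j = 0.

Definition lie_br (F : fieldType) (n : nat) (x y : 'M[F]_n) : 'M[F]_n :=
  x *m y - y *m x.

(* Matrix whose rows are ad_x applied to the basis E_{p,q} (p < q) of
   g(r0,r1,r2) (rows for non-relations are zero); its rank is rank(ad_x). *)
Definition ad_mx (F : fieldType) (r0 r1 r2 : nat) (x : 'M[F]_(r0 + r1 + r2)) :
  'M[F]_(#|{: 'I_(r0 + r1 + r2) * 'I_(r0 + r1 + r2)}|,
         (r0 + r1 + r2) * (r0 + r1 + r2)) :=
  \matrix_(k < #|{: 'I_(r0 + r1 + r2) * 'I_(r0 + r1 + r2)}|)
    let pq := enum_val k in
    if pprec pq.1 pq.2 then mxvec (lie_br x (delta_mx pq.1 pq.2)) else 0.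

Definition ad_rank (F : fieldType) (r0 r1 r2 : nat) (x : 'M[F]_(r0 + r1 + r2)) : nat :=
  \rank (ad_mx x).

Definition is_breadth (F : fieldType) (r0 r1 r2 : nat) (b : nat) : Prop :=
  (exists2 x : 'M[F]_(r0 + r1 + r2), in_gP x & ad_rank x = b) /\
  (forall x : 'M[F]_(r0 + r1 + r2), in_gP x -> (ad_rank x <= b)%N).

(* Main.v *)
Require Import Defs.
From HB Require Import structures.
From mathcomp Require Import all_boot all_order all_algebra.
Import GRing.Theory.

Module Aux.
Set Implicit Arguments. Unset Strict Implicit. Unset Printing Implicit Defensive.
Import GRing.Theory.
Local Open Scope ring_scope.

Section Main.
Variable F : fieldType.
Variables r0 r1 r2 : nat.
Local Notation n := (r0 + r1 + r2)%N.
Local Notation L := 'M[F]_n.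

Definition bidx (i : 'I_r0) : 'I_n := lshift r2 (lshift r1 i).
Definition midx (i : 'I_r1) : 'I_n := lshift r2 (rshift r0 i).
Definition tidx (i : 'I_r2) : 'I_n := rshift (r0 + r1) i.

Lemma split_l m k (i : 'I_m) : split (lshift k i) = inl i.
Proof. exact: (unsplitK (inl i)). Qed.
Lemma split_r m k (i : 'I_k) : split (rshift m i) = inr i.
Proof. exact: (unsplitK (inr i)). Qed.

Lemma ord3 (P : 'I_n -> Prop) : (forall i, P (bidx i)) -> (forall i, P (midx i)) ->
  (forall i, P (tidx i)) -> forall u, P u.
Proof.
move=> Pb Pm Pt u; rewrite -(splitK u); case: (split u) => [u1|j] /=; last exact: Pt.
rewrite -(splitK u1); case: (split u1) => [i|i] /=; [exact: Pb|exact: Pm].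
Qed.

Lemma lev_b i : plevel (bidx i) = 0%N.
Proof. by rewrite /plevel /= ltn_ord. Qed.
Lemma lev_m i : plevel (midx i) = 1%N.
Proof. by rewrite /plevel /= ltnNge leq_addr /= ltn_add2l ltn_ord. Qed.
Lemma lev_t i : plevel (tidx i) = 2%N.
Proof.
rewrite /plevel /= ltnNge (leq_trans (leq_addr r1 r0)) ?leq_addr //=.
by rewrite ltnNge leq_addr.
Qed.
Definition levE := (lev_b, lev_m, lev_t).

Lemma sum3 (f : 'I_n -> F) : \sum_k f k =
  \sum_i f (bidx i) + \sum_i f (midx i) + \sum_i f (tidx i).
Proof. by rewrite !big_split_ord. Qed.

Definition mk3 (A : 'M[F]_(r0, r1)) (B : 'M[F]_(r1, r2)) (C : 'M[F]_(r0, r2)) : L :=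
  \matrix_(u, v) match split u, split v with
   | inl u1, inl v1 => match split u1, split v1 with inl i, inr j => A i j | _, _ => 0 end
   | inl u1, inr j => match split u1 with inl i => C i j | inr i => B i j end
   | _, _ => 0 end.

Definition embed C := mk3 0 0 C.

Lemma mk3E A B C :
  (forall i j, mk3 A B C (bidx i) (midx j) = A i j) /\
  (forall i j, mk3 A B C (midx i) (tidx j) = B i j) /\
  (forall i j, mk3 A B C (bidx i) (tidx j) = C i j) /\
  (forall u v, (plevel v <= plevel u)%N -> mk3 A B C u v = 0).
Proof.
rewrite /mk3; do 3 (split; first by move=> i j; rewrite mxE !split_l !split_r).
apply: ord3 => i; apply: ord3 => j; rewrite !levE //= mxE ?split_l ?split_r //.
Qed.

Lemma mk3_in A B C : in_gP (mk3 A B C).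
Proof.
move=> u v; rewrite /pprec -leqNgt; case: (mk3E A B C) => _ [_ [_]]; exact.
Qed.

Definition bm (N : L) : 'M[F]_(r0, r1) := \matrix_(i, j) N (bidx i) (midx j).
Definition mt (N : L) : 'M[F]_(r1, r2) := \matrix_(i, j) N (midx i) (tidx j).

Lemma gZ (x : L) u v : in_gP x -> (plevel v <= plevel u)%N -> x u v = 0.
Proof. by move=> hx h; apply: hx; rewrite /pprec -leqNgt. Qed.

Lemma lev_le2 (u : 'I_n) : (plevel u <= 2)%N.
Proof. by rewrite /plevel; case: ifP => //; case: ifP. Qed.

Lemma mulL (x y : L) u v : in_gP x -> in_gP y ->
  (x *m y) u v = if (plevel u == 0%N) && (plevel v == 2%N) then
     \sum_j x u (midx j) * y (midx j) v else 0.
Proof.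
move=> hx hy; rewrite mxE sum3.
rewrite [X in X + _ + _]big1 => [|i _]; last by rewrite (gZ hx) ?mul0r // lev_b.
rewrite [X in _ + X]big1 => [|i _]; last by rewrite (gZ hy) ?mulr0 // lev_t lev_le2.
rewrite add0r addr0; case: ifP => // /negbT; rewrite negb_and => /orP[h|h].
  by rewrite big1 // => i _; rewrite (gZ hx) ?mul0r // lev_m lt0n.
rewrite big1 // => i _; rewrite (gZ hy) ?mulr0 // lev_m.
by move: (lev_le2 v) h; rewrite leq_eqVlt => /orP[->//|]; rewrite ltnS.
Qed.

Lemma subE m k (A B : 'M[F]_(m, k)) i j : (A - B) i j = A i j - B i j.
Proof. by rewrite !mxE. Qed.

Lemma bracketE (x y : L) : in_gP x -> in_gP y ->
  lie_br x y = embed (bm x *m mt y - bm y *m mt x).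
Proof.
move=> hx hy; apply/matrixP; apply: ord3 => i; apply: ord3 => j;
  rewrite /lie_br subE !mulL // !levE /=; case: (mk3E 0 0 (bm x *m mt y - bm y *m mt x)) => [E1 [E2 [E3 E4]]];
  rewrite ?E1 ?E2 ?E3 ?E4 ?levE ?mxE ?subrr //.
by congr (_ - _); apply: eq_bigr => k _; rewrite !mxE.
Qed.

Lemma mk3_bm A B C i j : mk3 A B C (bidx i) (midx j) = A i j.
Proof. by case: (mk3E A B C) => ->. Qed.
Lemma mk3_mt A B C i j : mk3 A B C (midx i) (tidx j) = B i j.
Proof. by case: (mk3E A B C) => _ [->]. Qed.
Lemma mk3_bt A B C i j : mk3 A B C (bidx i) (tidx j) = C i j.
Proof. by case: (mk3E A B C) => _ [_ [->]]. Qed.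
Lemma mk3_0 A B C u v : (plevel v <= plevel u)%N -> mk3 A B C u v = 0.
Proof. by case: (mk3E A B C) => _ [_ [_ H]]; apply: H. Qed.
Definition mk3E' := (mk3_bm, mk3_mt, mk3_bt).

Lemma addE m k (A B : 'M[F]_(m, k)) i j : (A + B) i j = A i j + B i j.
Proof. by rewrite !mxE. Qed.
Lemma scaleE m k a (A : 'M[F]_(m, k)) i j : (a *: A) i j = a * A i j.
Proof. by rewrite !mxE. Qed.

Lemma embedD C1 C2 : embed (C1 + C2) = embed C1 + embed C2.
Proof.
apply/matrixP; apply: ord3 => i; apply: ord3 => j; rewrite addE /embed;
  first [rewrite !mk3E' !mxE ?addr0 // | by rewrite !mk3_0 ?levE ?addr0].
Qed.
Lemma embedZ a C : embed (a *: C) = a *: embed C.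
Proof.
apply/matrixP; apply: ord3 => i; apply: ord3 => j; rewrite scaleE /embed;
  first [rewrite !mk3E' !mxE ?mulr0 // | by rewrite !mk3_0 ?levE ?mulr0].
Qed.
Lemma embed0 : embed 0 = 0.
Proof. by rewrite -(scale0r 0) embedZ scale0r. Qed.

Definition Sp : pred ('I_r0 * 'I_r2) := fun p => (p.1 < r1)%N || (p.2 < r1)%N.

Definition Gm (A : 'M[F]_(r0, r1)) (B : 'M[F]_(r1, r2)) :=
  \matrix_(k < #|Sp|) mxvec (embed (col_ebase A *m
     delta_mx (enum_val k).1 (enum_val k).2 *m row_ebase B)).

Lemma core (A : 'M[F]_(r0, r1)) (B : 'M[F]_(r1, r2)) A' B' :
  (mxvec (embed (A *m B' - A' *m B)) <= Gm A B)%MS.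
Proof.
set P := col_ebase A; set Q := row_ebase A; set P' := col_ebase B; set Q' := row_ebase B.
have eA : A = P *m pid_mx (\rank A) *m Q by rewrite mulmx_ebase.
have eB : B = P' *m pid_mx (\rank B) *m Q' by rewrite mulmx_ebase.
set M := pid_mx (\rank A) *m (Q *m B' *m invmx Q') - (invmx P *m A' *m P') *m pid_mx (\rank B).
have eM : A *m B' - A' *m B = P *m M *m Q'.
  rewrite /M mulmxBr mulmxBl; congr (_ - _).
    rewrite !mulmxA -(mulmxA _ (invmx Q')) mulVmx ?row_ebase_unit // mulmx1.
    by rewrite {1}eA.
  rewrite !mulmxA mulmxV ?col_ebase_unit // mul1mx.
  by rewrite {1}eB !mulmxA.
have M0 p : p \notin Sp -> M p.1 p.2 = 0.
  rewrite /Sp -topredE /= negb_or -!leqNgt => /andP[h1 h2].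
  rewrite /M !mxE !big1 ?subrr // => k _; rewrite !mxE.
    case: eqP => [ek|]; rewrite ?mul0r ?mulr0 //=.
    by rewrite ek ltnNge (leq_trans (rank_leq_row B) h2) mulr0.
  by rewrite ltnNge (leq_trans (rank_leq_col A) h1) andbF mul0r.
pose f N := mxvec (embed (P *m N *m Q')).
have fD : {morph f : a b / a + b}.
  by move=> a b; rewrite /f mulmxDr mulmxDl embedD linearD.
have f0 : f 0 = 0 by rewrite /f mulmx0 mul0mx embed0 linear0.
have fZ a N : f (a *: N) = a *: f N.
  by rewrite /f -scalemxAr -scalemxAl embedZ linearZ.
have fsum (I : finType) (g : I -> 'M_(r0, r2)) : f (\sum_i g i) = \sum_i f (g i).
  exact: (big_morph f fD f0).
rewrite eM -/(f M) (matrix_sum_delta M) fsum.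
under eq_bigr do rewrite fsum.
under eq_bigr do under eq_bigr do rewrite fZ.
rewrite pair_bigA /=.
have -> : \sum_(p : 'I_r0 * 'I_r2) M p.1 p.2 *: f (delta_mx p.1 p.2) =
     \sum_(p in Sp) M p.1 p.2 *: f (delta_mx p.1 p.2).
  rewrite [RHS]big_mkcond; apply: eq_bigr => p _; case: ifP => // /negbT hp.
  by rewrite M0 // scale0r.
rewrite big_enum_val.
set u : 'rV_#|Sp| := \row_k M (enum_val k).1 (enum_val k).2.
have -> : \sum_(i < #|Sp|) M (enum_val i).1 (enum_val i).2 *: f (delta_mx (enum_val i).1 (enum_val i).2)
   = u *m Gm A B.
  by rewrite mulmx_sum_row; apply: eq_bigr => k _; rewrite rowK /u [in RHS]mxE.
by rewrite submxMl.
Qed.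

Lemma delta_in (p q : 'I_n) : pprec p q -> in_gP (delta_mx p q : L).
Proof.
move=> hpq u v npq; rewrite mxE.
by case: eqP => [eu|]; case: eqP => [ev|] //=; subst; rewrite hpq in npq.
Qed.

Lemma ub (x : L) : in_gP x -> (ad_rank x <= #|Sp|)%N.
Proof.
move=> hx; rewrite /ad_rank.
apply: leq_trans (mxrankS (_ : ad_mx x <= Gm (bm x) (mt x))%MS) (rank_leq_row _).
apply/row_subP => k; rewrite rowK /=; case: ifP => h; last exact: sub0mx.
rewrite bracketE //; [exact: core | exact: delta_in].
Qed.

Lemma sum_lt k m : (k <= m)%N -> (\sum_(j < m) ((j < k)%N : nat) = k)%N.
Proof.
move=> hk; rewrite -(big_mkord xpredT (fun j => ((j < k)%N : nat))).
rewrite (big_cat_nat (n:=k)) //=.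
rewrite (eq_big_nat _ _ (F2 := fun=> 1%N)) => [|i /andP[_ ->]//].
rewrite [X in (_ + X)%N](eq_big_nat _ _ (F2 := fun=> 0%N)) => [|i /andP[h _]]; last first.
  by rewrite ltnNge h.
by rewrite !sum_nat_const_nat muln0 addn0 muln1 subn0.
Qed.

Lemma cardSp : (r1 <= r0)%N -> (r1 <= r2)%N -> #|Sp| = (r1 * (r0 + r2 - r1))%N.
Proof.
move=> h0 h2.
have -> : #|Sp| = (\sum_(p : 'I_r0 * 'I_r2) (((p.1 < r1) || (p.2 < r1))%N : nat))%N.
  rewrite -sum1_card big_mkcond /=; apply: eq_bigr => p _.
  by rewrite /Sp -topredE /=; case: ifP.
rewrite -(pair_bigA _ (fun (i : 'I_r0) (j : 'I_r2) => (((i < r1) || (j < r1))%N : nat))) /=.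
rewrite (eq_bigr (fun i : 'I_r0 => (r1 + ((i < r1)%N : nat) * (r2 - r1))%N)); last first.
  move=> i _; case hi: (i < r1)%N => /=.
    by rewrite sum_nat_const card_ord muln1 mul1n subnKC.
  by rewrite sum_lt // mul0n addn0.
rewrite big_split /= sum_nat_const card_ord -big_distrl /= sum_lt //.
by rewrite -addnBA // mulnDr mulnC.
Qed.

Definition x0 : L := mk3 (pid_mx r1) (pid_mx r1) 0.

Lemma bm_x0 : bm x0 = pid_mx r1.
Proof. by apply/matrixP => i j; rewrite mxE mk3_bm. Qed.
Lemma mt_x0 : mt x0 = pid_mx r1.
Proof. by apply/matrixP => i j; rewrite mxE mk3_mt. Qed.

Lemma bidx_inj : injective bidx.
Proof. by move=> a b /(congr1 val) /= /val_inj. Qed.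
Lemma midx_inj : injective midx.
Proof. by move=> a b /(congr1 val) /= /eqP; rewrite eqn_add2l => /eqP/val_inj. Qed.
Lemma tidx_inj : injective tidx.
Proof. by move=> a b /(congr1 val) /= /eqP; rewrite eqn_add2l => /eqP/val_inj. Qed.

Lemma neq_lev (u v : 'I_n) : plevel u != plevel v -> (u == v) = false.
Proof. by apply: contraNF => /eqP ->. Qed.

Lemma bm_delta_bm i j : bm (delta_mx (bidx i) (midx j)) = delta_mx i j.
Proof. by apply/matrixP => a b; rewrite !mxE !(inj_eq bidx_inj) !(inj_eq midx_inj). Qed.
Lemma mt_delta_bm i j : mt (delta_mx (bidx i) (midx j)) = 0.
Proof. by apply/matrixP => a b; rewrite !mxE neq_lev ?levE. Qed.
Lemma mt_delta_mt i j : mt (delta_mx (midx i) (tidx j)) = delta_mx i j.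
Proof. by apply/matrixP => a b; rewrite !mxE !(inj_eq midx_inj) !(inj_eq tidx_inj). Qed.
Lemma bm_delta_mt i j : bm (delta_mx (midx i) (tidx j)) = 0.
Proof. by apply/matrixP => a b; rewrite !mxE [bidx a == _]neq_lev ?levE. Qed.

Lemma delta_pid (i : 'I_r0) (j' : 'I_r1) (j : 'I_r2) : j' = j :> nat ->
  delta_mx i j' *m pid_mx r1 = delta_mx i j :> 'M[F]_(r0, r2).
Proof.
move=> hv; apply/matrixP => a b; rewrite mxE (bigD1 j') //= big1 => [|k /negbTE nk]; last first.
  by rewrite !mxE nk andbF mul0r.
rewrite !mxE eqxx andbT ltn_ord andbT addr0 hv.
by case: (a == i); rewrite ?mul0r ?mul1r //= eq_sym.
Qed.

Lemma pid_delta (i : 'I_r0) (i' : 'I_r1) (j : 'I_r2) : i' = i :> nat ->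
  pid_mx r1 *m delta_mx i' j = delta_mx i j :> 'M[F]_(r0, r2).
Proof.
move=> hv; apply/matrixP => a b; rewrite mxE (bigD1 i') //= big1 => [|k /negbTE nk]; last first.
  by rewrite !mxE nk mulr0.
rewrite !mxE eqxx /= addr0 hv.
case: (b == j); rewrite ?mulr0 ?mulr1 ?andbT ?andbF //=.
case e: (a == i :> nat); rewrite -[a == i]/(a == i :> nat) e //=.
by rewrite (eqP e) -hv ltn_ord.
Qed.

Lemma embedN C : embed (- C) = - embed C.
Proof. by rewrite -scaleN1r embedZ scaleN1r. Qed.

Definition Hm := \matrix_(k < #|Sp|) mxvec (embed (delta_mx (enum_val k).1 (enum_val k).2)).

Lemma H_sub : (Hm <= ad_mx x0)%MS.
Proof.
apply/row_subP => k; rewrite rowK.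
have hp := enum_valP k.
case: (enum_val k) hp => i j; rewrite /Sp -topredE /= => h.
case hj: (j < r1)%N.
  pose kk := enum_rank (bidx i, midx (Ordinal hj)).
  have E : row kk (ad_mx x0) = - mxvec (embed (delta_mx i j)).
    rewrite rowK /= enum_rankK /= /pprec !levE /=.
    rewrite bracketE; [|exact: mk3_in|by apply: delta_in; rewrite /pprec !levE].
    rewrite bm_x0 mt_x0 mt_delta_bm bm_delta_bm.
    by rewrite mulmx0 sub0r (@delta_pid i (Ordinal hj) j) // embedN linearN.
  by rewrite -[mxvec _]opprK -E eqmx_opp row_sub.
have hi : (i < r1)%N by move: h; rewrite hj orbF.
pose kk := enum_rank (midx (Ordinal hi), tidx j).
have E : row kk (ad_mx x0) = mxvec (embed (delta_mx i j)).
  rewrite rowK /= enum_rankK /= /pprec !levE /=.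
  rewrite bracketE; [|exact: mk3_in|by apply: delta_in; rewrite /pprec !levE].
    rewrite bm_x0 mt_x0 mt_delta_mt bm_delta_mt.
  by rewrite mul0mx subr0 (@pid_delta i (Ordinal hi) j).
by rewrite -E row_sub.
Qed.

Lemma H_rank : (#|Sp| <= \rank Hm)%N.
Proof.
pose K : 'M[F]_(n * n, #|Sp|) := \matrix_(v, l)
  (v == mxvec_index (bidx (enum_val l).1) (tidx (enum_val l).2))%:R.
have HK : Hm *m K = 1%:M.
  apply/matrixP => k l; rewrite mxE.
  rewrite (bigD1 (mxvec_index (bidx (enum_val l).1) (tidx (enum_val l).2))) //=.
  rewrite big1 => [|v /negbTE nv]; last by rewrite [K _ _]mxE nv mulr0.
  rewrite [K _ _]mxE eqxx mulr1 addr0.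
  rewrite [Hm _ _]mxE mxvecE /embed mk3_bt !mxE.
  rewrite -(inj_eq enum_val_inj).
  by case: (enum_val k) (enum_val l) => [a b] [c d] /=; rewrite xpair_eqE (eq_sym a) (eq_sym b).
by rewrite -[X in (X <= _)%N](mxrank1 F) -HK mxrankM_maxl.
Qed.

Lemma lb : (#|Sp| <= ad_rank x0)%N.
Proof. exact: leq_trans H_rank (mxrankS H_sub). Qed.

End Main.

End Aux.
Import Aux.

Theorem theorem5 (F : closedFieldType) (charF0 : [pchar F]%R =i pred0)
  (r0 r1 r2 : nat) (h0 : (1 <= r0)%N) (h1 : (1 <= r1)%N) (h2 : (1 <= r2)%N)
  (h10 : (r1 < r0)%N) (h12 : (r1 < r2)%N) :
  is_breadth F r0 r1 r2 (r1 * (r0 + r2 - r1))%N.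
Proof.
have e := @cardSp r0 r1 r2 (ltnW h10) (ltnW h12).
split.
  exists (x0 F r0 r1 r2); first exact: mk3_in.
  apply/eqP; rewrite eqn_leq -{1}e ub; last exact: mk3_in.
  by rewrite /= -e lb.
by move=> x hx; rewrite -e ub.
Qed.
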